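(* Let $\mu\in\mathcal{RP}_p(\mathbb{C})$ have radial CDF $\Phi_0$ with $\inf\{x\ge0:\Phi_0(x)=1\}=1$. Then $\lim_{t\to1^-}\Phi_t((1-t)r)=r$ for every fixed $r\in(0,1)$, where $\Phi_t$ is the radial CDF of $\mu^t$, the differentiation flow starting from $\mu$.
   Context: $\mathcal{RP}_p(\mathbb{C})$: rotationally invariant probability measures $\mu$ on $\mathbb{C}$ with $\int_0^1\mu(\mathbb{D}_r)r^{-1}dr<\infty$, $\mathbb{D}_r=\{|z|<r\}$. Radial CDF: $\Phi(r)=\nu(\{|z|\le r\})$; quantile function $\Phi^{\langle-1\rangle}(x)=\inf\{r:\Phi(r)\ge x\}$. The differentiation flow starting from $\mu$ (radial CDF $\Phi_0$) is the family of rotationally invariant probability measures $\mu^t$, $0\le t<1$, whose radial CDFs $\Phi_t$ satisfy $\Phi_t^{\langle-1\rangle}(x)=\frac{x(1-t)\Phi_0^{\langle-1\rangle}((1-t)x+t)}{x(1-t)+t}$ for $x\in(0,1)$. *)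

(* Defs.v *)
(* The complex plane C is modelled as R * R
   (z = (Re z, Im z)) with its product (Borel) sigma-algebra. *)
From HB Require Import structures.
From mathcomp Require Import all_boot all_order all_algebra.
From mathcomp Require Import all_classical all_reals all_analysis.
Set Implicit Arguments. Unset Strict Implicit. Unset Printing Implicit Defensive.
Import Order.TTheory GRing.Theory Num.Theory.
Local Open Scope classical_set_scope.
Local Open Scope ring_scope.

Section RadialDefs.
Context {R : realType}.

Definition cmod (z : R * R) : R := Num.sqrt (z.1 ^+ 2 + z.2 ^+ 2).

(* rotation z |-> e^{i th} z *)
Definition crot (th : R) (z : R * R) : R * R :=
  (cos th * z.1 - sin th * z.2, sin th * z.1 + cos th * z.2).

Definition disc (r : R) : set (R * R) := [set z | cmod z < r].

Definition rot_invariant (mu : probability (R * R)%type R) : Prop :=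
  forall (th : R) (A : set (R * R)), measurable A ->
    mu (crot th @^-1` A) = mu A.

Definition RPp (mu : probability (R * R)%type R) : Prop :=
  rot_invariant mu /\
  (\int[lebesgue_measure]_(r in `]0%R, 1%R[) (mu (disc r) * (r^-1)%:E) < +oo)%E.

Definition radial_cdf (mu : probability (R * R)%type R) (r : R) : R :=
  fine (mu [set z | cmod z <= r]).

Definition quantile (Phi : R -> R) (x : R) : R := inf [set r | x <= Phi r].

Definition diff_flow (mu : probability (R * R)%type R)
    (mut : R -> probability (R * R)%type R) : Prop :=
  forall t : R, 0 <= t < 1 ->
    rot_invariant (mut t) /\
    forall x : R, 0 < x < 1 ->
      quantile (radial_cdf (mut t)) x =
      x * (1 - t) * quantile (radial_cdf mu) ((1 - t) * x + t) / (x * (1 - t) + t).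

End RadialDefs.

(* Main.v *)
From HB Require Import structures.
From mathcomp Require Import all_boot all_order all_algebra.
From mathcomp Require Import all_classical all_reals all_analysis.
Require Import Defs.
From mathcomp Require Import lra ring.
Import Order.TTheory GRing.Theory Num.Theory.
Import numFieldNormedType.Exports.
Local Open Scope classical_set_scope.
Local Open Scope ring_scope.
Section H.
Context {R : realType}.
Lemma meas_cmod : measurable_fun setT (@cmod R).
Proof.
rewrite /cmod.
apply: measurableT_comp.
  apply: measurable_realfun.continuous_measurable_fun; exact: sqrt_continuous.
apply: measurable_realfun.measurable_funD; apply: measurable_realfun.measurable_funX.
 exact: measurable_fst.
exact: measurable_snd.
Qed.

Lemma meas_ball (r : R) : measurable [set z : R * R | cmod z <= r].
Proof.
have -> : [set z : R * R | cmod z <= r] = cmod @^-1` `]-oo, r].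
  by apply/seteqP; split => z /=; rewrite in_itv /=.
by rewrite -[X in measurable X]setTI; apply: meas_cmod => //.
Qed.

Lemma cdf_le (mu : probability (R * R)%type R) a b : a <= b ->
  radial_cdf mu a <= radial_cdf mu b.
Proof.
move=> ab; rewrite /radial_cdf; apply: fine_le; try (apply: fin_num_measure; exact: meas_ball).
rewrite le_measure // ?inE; try exact: meas_ball.
by move=> z /= h; apply: le_trans ab.
Qed.

Lemma cdf_neg (mu : probability (R * R)%type R) a : a < 0 -> radial_cdf mu a = 0.
Proof.
move=> a0; rewrite /radial_cdf.
have -> : [set z : R * R | cmod z <= a] = set0.
  apply/seteqP; split => z //= h.
  have : 0 <= cmod z by rewrite /cmod sqrtr_ge0.
  by rewrite leNgt (le_lt_trans h a0).
by rewrite measure0.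
Qed.

Definition Sx (mu : probability (R * R)%type R) (x : R) : set R := [set r | x <= radial_cdf mu r].

Lemma Sx_lb (mu : probability (R * R)%type R) (x : R) : 0 < x -> has_lbound (Sx mu x).
Proof.
move=> x0; exists 0 => r /=; rewrite /Sx /= => h.
rewrite leNgt; apply/negP => r0; move: h; rewrite cdf_neg //.
by rewrite leNgt x0.
Qed.

Lemma qB (mu : probability (R * R)%type R) (x y : R) : 0 < x -> y < quantile (radial_cdf mu) x -> radial_cdf mu y < x.
Proof.
move=> x0 yq; rewrite ltNge; apply/negP => h.
have := ge_inf (Sx_lb mu x x0) h.
by rewrite /quantile leNgt yq.
Qed.

Lemma qA {mu : probability (R * R)%type R} {x y : R} : (Sx mu x !=set0) -> quantile (radial_cdf mu) x < y -> x <= radial_cdf mu y.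
Proof.
move=> ne qy; have [s Ss sy] := inf_lt ne qy.
apply: le_trans Ss _; apply: cdf_le; exact: ltW.
Qed.
End H.

Theorem corollary5p6 (R : realType) (mu : probability (R * R)%type R)
    (mut : R -> probability (R * R)%type R) :
  RPp mu ->
  inf [set x : R | 0 <= x /\ radial_cdf mu x = 1] = 1 ->
  diff_flow mu mut ->
  forall r : R, 0 < r < 1 ->
    radial_cdf (mut t) ((1 - t) * r) @[t --> (1 : R)^'-] --> r.
Proof.
move=> _ Hinf Hflow r /andP[r0 r1].
set E := [set x : R | 0 <= x /\ radial_cdf mu x = 1] in Hinf.
have En : E !=set0.
  apply/set0P/eqP => E0; move: Hinf; rewrite E0 inf0 => /eqP.
  by rewrite eq_sym oner_eq0.
have Elb : has_lbound E by exists 0 => z [].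
have Ege1 : forall z, E z -> 1 <= z by move=> z Ez; rewrite -Hinf; exact: ge_inf.
have [x1 Ex1] := En.
have F0lt1 : forall y, y < 1 -> radial_cdf mu y < 1.
  move=> y y1; have [y0|y0] := ltP y 0; first by rewrite cdf_neg.
  rewrite ltNge; apply/negP => Fy.
  have Fy1 : radial_cdf mu y = 1.
    apply/eqP; rewrite eq_le Fy andbT; case: (Ex1) => _ <-.
    apply: cdf_le; apply: le_trans (Ege1 _ Ex1); exact: ltW.
  by have := Ege1 y (conj y0 Fy1); rewrite leNgt y1.
have S0ne : forall w, w <= 1 -> Sx mu w !=set0.
  by move=> w w1; exists x1; rewrite /Sx /=; case: Ex1 => _ ->.
have Q0ub : forall w z, 0 < w <= 1 -> E z -> quantile (radial_cdf mu) w <= z.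
  move=> w z /andP[w0 w1] [_ Fz]; apply: (ge_inf (Sx_lb mu w w0)).
  by rewrite /Sx /= Fz.
have Q0lb : forall w y, w <= 1 -> radial_cdf mu y < w -> y <= quantile (radial_cdf mu) w.
  move=> w y w1 Fy; rewrite leNgt; apply/negP => qy.
  by have := qA (S0ne w w1) qy; rewrite leNgt Fy.
have Form : forall t x, 0 <= t < 1 -> 0 < x < 1 ->
    quantile (radial_cdf (mut t)) x =
    x * (1 - t) * quantile (radial_cdf mu) ((1 - t) * x + t) / (x * (1 - t) + t).
  by move=> t x ht hx; exact: ((Hflow t ht).2 x hx).
have Stne : forall t x, 0 <= t < 1 -> 0 < x < 1 -> Sx (mut t) x !=set0.
  move=> t x /andP[t0 t1] /andP[x0 x1'].
  set p := radial_cdf mu (1/2).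
  have p1 : p < 1 by apply: F0lt1; lra.
  set x' := Num.max x ((1 + p) / 2).
  have x'x : x <= x' by rewrite le_max lexx.
  have x'p : (1 + p) / 2 <= x' by rewrite le_max lexx orbT.
  have x'1 : x' < 1 by rewrite gt_max x1'; lra.
  have x'0 : 0 < x' by lra.
  suff [s Ss] : Sx (mut t) x' !=set0.
    by exists s; rewrite /Sx /=; apply: le_trans Ss.
  apply/set0P/eqP => S0.
  have := Form t x' (ltac:(by rewrite t0 t1)) (ltac:(by rewrite x'0 x'1)).
  rewrite /quantile -/(Sx (mut t) x') S0 inf0.
  set w := (1 - t) * x' + t.
  have w1 : w <= 1 by rewrite /w; nra.
  have wp : p < w by rewrite /w; nra.
  have Qw := Q0lb w (1/2) w1 wp.
  move=> /esym /eqP; apply/negP; apply: lt0r_neq0.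
  apply: divr_gt0; last by nra.
  apply: mulr_gt0; [nra | lra].
have L : forall x, 0 < x < r ->
    \forall t \near (1:R)^'-, x <= radial_cdf (mut t) ((1 - t) * r).
  move=> x /andP[x0 xr].
  have epos : 0 < (r - x) / (2 * x) by apply: divr_gt0; lra.
  have hE : inf E < 1 + (r - x) / (2 * x) by rewrite Hinf; lra.
  have [z Ez zlt] := inf_lt En hE.
  have ht : Num.max 0 ((r + x) / (2 * r)) < 1.
    by rewrite gt_max ltr01 ltr_pdivrMr ?mulr_gt0 //; lra.
  near=> t.
  have t1 : t < 1 by near: t; exact: nbhs_left_lt.
  have tm : Num.max 0 ((r + x) / (2 * r)) < t by near: t; exact: nbhs_left_gt.
  move: tm; rewrite gt_max => /andP[t0 tr].
  have ht' : 0 <= t < 1 by rewrite t1 ltW.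
  have hx : 0 < x < 1 by rewrite x0 /=; lra.
  apply: qA; first exact: Stne.
  rewrite Form //.
  set w := (1 - t) * x + t.
  have Qw : quantile (radial_cdf mu) w <= z by apply: Q0ub => //; rewrite /w; apply/andP; split; nra.
  rewrite ltr_pdivrMr; last by nra.
  have zx : z * x < (r + x) / 2.
    have e : (r - x) / (2 * x) * x = (r - x) / 2.
      by field; rewrite gt_eqF.
    move: zlt; rewrite -(ltr_pM2r x0) mulrDl mul1r e; lra.
  have rt : (r + x) / 2 < r * t.
    move: tr; rewrite ltr_pdivrMr ?mulr_gt0 //; lra.
  set Q := quantile (radial_cdf mu) w in Qw *.
  have h1 : x * Q <= x * z by rewrite ler_pM2l.
  have h2 : r * t <= r * (x * (1 - t) + t) by rewrite ler_pM2l //; nra.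
  have h3 : x * Q < r * (x * (1 - t) + t) by lra.
  have h4 : 0 < 1 - t by lra.
  have := ltr_pM2l h4 (x * Q) (r * (x * (1 - t) + t)); rewrite h3 => /esym h5.
  by move: h5; rewrite !mulrA [(1 - t) * x]mulrC.
have U : forall x', r < x' < 1 ->
    \forall t \near (1:R)^'-, radial_cdf (mut t) ((1 - t) * r) < x'.
  move=> x' /andP[rx x'1].
  have x'0 : 0 < x' by lra.
  set y := (r + x') / (2 * x').
  have y1 : y < 1 by rewrite /y ltr_pdivrMr ?mulr_gt0 //; lra.
  have xy : x' * y = (r + x') / 2 by rewrite /y; field; rewrite gt_eqF.
  set p := radial_cdf mu y.
  have p1 : p < 1 by exact: F0lt1.
  have hm : Num.max 0 p < 1 by rewrite gt_max ltr01.
  near=> t.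
  have t1 : t < 1 by near: t; exact: nbhs_left_lt.
  have tm : Num.max 0 p < t by near: t; exact: nbhs_left_gt.
  move: tm; rewrite gt_max => /andP[t0 tp].
  have ht' : 0 <= t < 1 by rewrite t1 ltW.
  have hx : 0 < x' < 1 by rewrite x'0.
  apply: qB => //.
  rewrite Form //.
  set w := (1 - t) * x' + t.
  have Qw : y <= quantile (radial_cdf mu) w.
    apply: Q0lb; first by rewrite /w; nra.
    rewrite -/p /w; nra.
  set Q := quantile (radial_cdf mu) w in Qw *.
  rewrite ltr_pdivlMr; last by nra.
  have h1 : x' * y <= x' * Q by rewrite ler_pM2l.
  have D1 : x' * (1 - t) + t <= 1.
    have : 0 <= (1 - x') * (1 - t) by apply: mulr_ge0; lra.
    lra.
  have h2 : r * (x' * (1 - t) + t) <= r.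
    by rewrite -[leRHS]mulr1 ler_pM2l.
  have h3 : r * (x' * (1 - t) + t) < x' * Q by lra.
  have h4 : 0 < 1 - t by lra.
  have := ltr_pM2l h4 (r * (x' * (1 - t) + t)) (x' * Q); rewrite h3 => /esym h5.
  by move: h5; rewrite !mulrA [(1 - t) * x']mulrC.
apply/cvgrPdist_lt => e e0.
set a := Num.min e r / 2.
set b := Num.min e (1 - r) / 2.
have a0 : 0 < a by rewrite /a divr_gt0 // lt_min e0 r0.
have b0 : 0 < b by rewrite /b divr_gt0 // lt_min e0 subr_gt0 r1.
have ae : a < e.
  rewrite /a; have : Num.min e r <= e by rewrite ge_min lexx.
  lra.
have be : b < e.
  rewrite /b; have : Num.min e (1 - r) <= e by rewrite ge_min lexx.
  lra.
have ar : a < r.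
  rewrite /a; have : Num.min e r <= r by rewrite ge_min lexx orbT.
  lra.
have br : b < 1 - r.
  rewrite /b; have : Num.min e (1 - r) <= 1 - r by rewrite ge_min lexx orbT.
  lra.
have hL := L (r - a) (ltac:(apply/andP; split; lra)).
have hU := U (r + b) (ltac:(apply/andP; split; lra)).
apply: filterS2 hL hU => t h1 h2.
rewrite ltr_norml; apply/andP; split; lra.
Unshelve. all: by end_near.
Qed.
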